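(* Let $d\ge 2$ and $n\ge 1$ be integers and let $M_x=\{|\phi_x^a\rangle: a=1,\ldots,d\}$, $x=1,\ldots,n$, be a set of mutually unbiased orthonormal bases of $\mathbb{C}^d$. Define the steering functional $F=\{F_x^a\}$ by $F_x^a=|\phi_x^a\rangle\langle\phi_x^a|$ for $x=1,\ldots,n$, $a=1,\ldots,d$. Then $$V(F)\ \ge\ \frac{n\sqrt{d}}{n+1+\sqrt{d}}.$$
   Context: Two orthonormal bases $\{|\phi_1^a\rangle\}_{a=1}^d$, $\{|\phi_2^b\rangle\}_{b=1}^d$ of $\mathbb{C}^d$ are mutually unbiased if $|\langle\phi_1^a|\phi_2^b\rangle|=1/\sqrt{d}$ for all $a,b$; a set of bases is a set of MUBs if every two distinct bases in it are mutually unbiased. An $(n,m,d)$-assemblage is a family $\sigma=\{\sigma_x^a: x=1,\ldots,n,\ a=1,\ldots,m\}$ of positive semidefinite operators on $\mathbb{C}^d$ such that $\sum_a\sigma_x^a$ does not depend on $x$ and has trace $1$; $\mathcal{Q}$ is the set of all such assemblages. An assemblage has a local hidden state (LHS) model if there exist a finite index set $\Lambda$, weights $q_\lambda\ge0$ with $\sum_\lambda q_\lambda=1$, density matrices $\sigma_\lambda$ on $\mathbb{C}^d$, and probability distributions $\{p_\lambda(a|x)\}_a$ for each $x,\lambda$, such that $\sigma_x^a=\sum_{\lambda}q_\lambda p_\lambda(a|x)\sigma_\lambda$ for all $x,a$; $\mathcal{L}$ is the set of such assemblages. For a steering functional $F=\{F_x^a\}$ (a family of $d\times d$ matrices), $\langle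 F,\sigma\rangle=\mathrm{Tr}\big(\sum_{x,a}F_x^a\sigma_x^a\big)$, $S_{LHS}(F)=\sup\{|\langle F,\sigma\rangle|:\sigma\in\mathcal{L}\}$, $S_Q(F)=\sup\{|\langle F,\sigma\rangle|:\sigma\in\mathcal{Q}\}$, and the quantum violation is $V(F)=S_Q(F)/S_{LHS}(F)$. *)

(* Defs.v *)
From HB Require Import structures.
From mathcomp Require Import all_boot all_order all_algebra.
From mathcomp Require Import complex.
From mathcomp Require Import boolp classical_sets reals.
Set Implicit Arguments. Unset Strict Implicit. Unset Printing Implicit Defensive.
Import Order.TTheory GRing.Theory Num.Theory.
Local Open Scope ring_scope.
Local Open Scope complex_scope.

Section Steering.
Variable R : realType.
Local Notation C := R[i].

Definition adjmx (m k : nat) (A : 'M[C]_(m, k)) : 'M[C]_(k, m) :=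
  (map_mx Num.conj A)^T.

Definition psd (d : nat) (A : 'M[C]_d) : Prop :=
  adjmx A = A /\ forall v : 'cV[C]_d, 0 <= (adjmx v *m A *m v) 0 0.

Definition density (d : nat) (rho : 'M[C]_d) : Prop :=
  psd rho /\ \tr rho = 1.

Definition assemblage (n m d : nat) (sigma : 'I_n -> 'I_m -> 'M[C]_d) : Prop :=
  (forall x a, psd (sigma x a)) /\
  exists rho : 'M[C]_d, (forall x, \sum_(a < m) sigma x a = rho) /\ \tr rho = 1.

(* LHS model with finite hidden-variable set 'I_k *)
Definition has_LHS (n m d : nat) (sigma : 'I_n -> 'I_m -> 'M[C]_d) : Prop :=
  exists (k : nat) (q : 'I_k -> R) (rho : 'I_k -> 'M[C]_d)
         (p : 'I_k -> 'I_n -> 'I_m -> R),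
    (forall l, 0 <= q l) /\ \sum_(l < k) q l = 1 /\
    (forall l, density (rho l)) /\
    (forall l x a, 0 <= p l x a) /\ (forall l x, \sum_(a < m) p l x a = 1) /\
    (forall x a, sigma x a = \sum_(l < k) ((q l * p l x a)%:C *: rho l)).

Definition pairing (n m d : nat) (F sigma : 'I_n -> 'I_m -> 'M[C]_d) : C :=
  \tr (\sum_(x < n) \sum_(a < m) (F x a *m sigma x a)).

Definition S_LHS (n m d : nat) (F : 'I_n -> 'I_m -> 'M[C]_d) : R :=
  sup [set r : R | exists sigma, has_LHS sigma /\ r = Normc.normc (pairing F sigma)].

Definition S_Q (n m d : nat) (F : 'I_n -> 'I_m -> 'M[C]_d) : R :=
  sup [set r : R | exists sigma, assemblage sigma /\ r = Normc.normc (pairing F sigma)].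

Definition violation (n m d : nat) (F : 'I_n -> 'I_m -> 'M[C]_d) : R :=
  S_Q F / S_LHS F.

Definition orthonormal_basis (d : nat) (phi : 'I_d -> 'cV[C]_d) : Prop :=
  forall a b, (adjmx (phi a) *m phi b) 0 0 = (a == b)%:R.

Definition mutually_unbiased (d : nat) (phi psi : 'I_d -> 'cV[C]_d) : Prop :=
  forall a b, Normc.normc ((adjmx (phi a) *m psi b) 0 0) = 1 / Num.sqrt (d%:R).

End Steering.

(* Main.v *)
Require Import Defs.
From HB Require Import structures.
From mathcomp Require Import all_boot all_order all_algebra.
From mathcomp Require Import complex.
From mathcomp Require Import boolp classical_sets reals.
From mathcomp Require Import ring lra.
Import Order.TTheory GRing.Theory Num.Theory.
Set Implicit Arguments. Unset Strict Implicit. Unset Printing Implicit Defensive.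
Local Open Scope ring_scope.

Section H.
Variable R : realType.
Local Notation C := R[i].

Lemma adjmxM m k l (A : 'M[C]_(m,k)) (B : 'M[C]_(k,l)) :
  adjmx (A *m B) = adjmx B *m adjmx A.
Proof. by rewrite /adjmx map_mxM trmx_mul. Qed.

Lemma adjmxK m k (A : 'M[C]_(m,k)) : adjmx (adjmx A) = A.
Proof. by apply/matrixP=> i j; rewrite !mxE conjCK. Qed.

Lemma adjmxD m k (A B : 'M[C]_(m,k)) : adjmx (A + B) = adjmx A + adjmx B.
Proof. by apply/matrixP=> i j; rewrite !mxE rmorphD. Qed.

Lemma adjmxN m k (A : 'M[C]_(m,k)) : adjmx (- A) = - adjmx A.
Proof. by apply/matrixP=> i j; rewrite !mxE rmorphN. Qed.

Lemma adjmxZ m k c (A : 'M[C]_(m,k)) : adjmx (c *: A) = Num.conj c *: adjmx A.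
Proof. by apply/matrixP=> i j; rewrite !mxE rmorphM. Qed.

Lemma adjmx_sum m k (I : finType) (F : I -> 'M[C]_(m,k)) :
  adjmx (\sum_i F i) = \sum_i adjmx (F i).
Proof. by apply/matrixP=> i j; rewrite !mxE !summxE rmorph_sum; apply: eq_bigr => l _; rewrite !mxE. Qed.

Lemma adjmx1 k : adjmx (1%:M : 'M[C]_k) = 1%:M.
Proof. by apply/matrixP=> i j; rewrite !mxE (eq_sym j i) conjC_nat. Qed.

Definition L d (rho A : 'M[C]_d) := \tr (A *m rho).

Lemma L_rank1 d (rho : 'M[C]_d) (v w : 'cV[C]_d) :
  L rho (v *m adjmx w) = (adjmx w *m rho *m v) 0 0.
Proof. by rewrite /L -mulmxA mxtrace_mulC trace_mx11. Qed.

Lemma L_ge0 d (rho : 'M[C]_d) (v : 'cV[C]_d) : psd rho -> 0 <= L rho (v *m adjmx v).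
Proof. by move=> [_ h]; rewrite L_rank1. Qed.

Lemma LD d (rho A B : 'M[C]_d) : L rho (A + B) = L rho A + L rho B.
Proof. by rewrite /L mulmxDl mxtraceD. Qed.
Lemma LN d (rho A : 'M[C]_d) : L rho (- A) = - L rho A.
Proof. by rewrite /L mulNmx raddfN. Qed.
Lemma LB d (rho A B : 'M[C]_d) : L rho (A - B) = L rho A - L rho B.
Proof. by rewrite LD LN. Qed.
Lemma LZ d (rho A : 'M[C]_d) c : L rho (c *: A) = c * L rho A.
Proof. by rewrite /L -scalemxAl mxtraceZ. Qed.
Lemma L_sum d (rho : 'M[C]_d) (I : Type) (r : seq I) (P : pred I) (F : I -> 'M[C]_d) :
  L rho (\sum_(i <- r | P i) F i) = \sum_(i <- r | P i) L rho (F i).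
Proof. by rewrite /L mulmx_suml raddf_sum. Qed.

Lemma gram_sum d k (A : 'M[C]_(d,k)) :
  A *m adjmx A = \sum_(j < k) col j A *m adjmx (col j A).
Proof.
apply/matrixP=> i i'; rewrite !mxE summxE; apply: eq_bigr => j _.
by rewrite !mxE big_ord1 !mxE.
Qed.

Lemma gram_ge0 d k (rho : 'M[C]_d) (A : 'M[C]_(d,k)) : psd rho -> 0 <= L rho (A *m adjmx A).
Proof. by move=> h; rewrite gram_sum L_sum; apply: sumr_ge0 => j _; apply: L_ge0. Qed.

Definition dot d (v w : 'cV[C]_d) := (adjmx v *m w) 0 0.

Lemma dot_conj d (v w : 'cV[C]_d) : Num.conj (dot v w) = dot w v.
Proof.
by rewrite /dot !mxE rmorph_sum; apply: eq_bigr => i _; rewrite !mxE rmorphM /= conjCK mulrC.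
Qed.

Lemma rank1_mul d (a b c e : 'cV[C]_d) :
  (a *m adjmx b) *m (c *m adjmx e) = dot b c *: (a *m adjmx e).
Proof.
by rewrite mulmxA -(mulmxA a) [adjmx b *m c]mx11_scalar mul_mx_scalar -scalemxAl.
Qed.


Lemma sum_neq_const n (x : 'I_n) (c : C) : \sum_(y < n | y != x) c = c *+ n - c.
Proof.
have h : \sum_(y < n) c = c + \sum_(y < n | y != x) c by rewrite (bigD1 x).
by rewrite sumr_const card_ord in h; rewrite h addrAC subrr add0r.
Qed.

Lemma swap_neq n (F : 'I_n -> 'I_n -> C) :
  \sum_x \sum_(y | y != x) F x y = \sum_x \sum_(y | y != x) F y x.
Proof.
rewrite (eq_bigr (fun x => \sum_y (if y != x then F x y else 0))); last by move=> x _; rewrite big_mkcond.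
rewrite exchange_big; apply: eq_bigr => x _; rewrite [RHS]big_mkcond; apply: eq_bigr => y _.
by rewrite eq_sym.
Qed.

Lemma L_w d (rho : 'M[C]_d) (a b : 'cV[C]_d) (c : C) :
  L rho ((a - c *: b) *m adjmx (a - c *: b)) =
  L rho (a *m adjmx a) - Num.conj c * L rho (a *m adjmx b)
  - c * L rho (b *m adjmx a) + c * Num.conj c * L rho (b *m adjmx b).
Proof.
rewrite adjmxD adjmxN adjmxZ mulmxBl !mulmxBr -!scalemxAl -!scalemxAr.
rewrite !LB !LZ; ring.
Qed.


Lemma key d n (rho : 'M[C]_d) (u : 'I_n -> 'cV[C]_d) (sc : C) :
  psd rho -> 0 < sc -> Num.conj sc = sc -> (1 <= n)%N ->
  (forall x, dot (u x) (u x) = 1) ->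
  (forall x y, x != y -> sc * sc * (dot (u x) (u y) * Num.conj (dot (u x) (u y))) = 1) ->
  \sum_x L rho (u x *m adjmx (u x)) <= (1 + (n%:R - 1) / sc) * \tr rho.
Proof.
move=> Hrho sc0 hsc n1 hu1 hmu.
set lam := 1 + (n%:R - 1) / sc.
have n0 : 0 <= (n%:R - 1 : C) by rewrite subr_ge0 ler1n.
have lam0 : 0 < lam by rewrite /lam; apply: (lt_le_trans ltr01); rewrite lerDl divr_ge0 // ltW.
have lamc : Num.conj lam = lam.
  by apply: conj_Creal; apply: gtr0_real.
have lamc' : Num.conj (lam^-1) = lam^-1 by apply: conj_Creal; apply: gtr0_real; rewrite invr_gt0.
set T := \sum_x L rho (u x *m adjmx (u x)).
set g := fun x y => dot (u x) (u y).
set b := fun x y => L rho (u x *m adjmx (u y)).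
set Z := \sum_x \sum_(y | y != x) g x y * b x y.
set Q := \sum_x u x *m adjmx (u x).
have QH : adjmx Q = Q.
  by rewrite /Q adjmx_sum; apply: eq_bigr => x _; rewrite adjmxM adjmxK.
have LQ : L rho Q = T by rewrite /Q L_sum.
have LQQ : L rho (Q *m Q) = T + Z.
  rewrite /Q mulmx_suml L_sum /T /Z -big_split /=; apply: eq_bigr => x _.
  rewrite mulmx_sumr L_sum (bigD1 x) //=; congr (_ + _).
    by rewrite rank1_mul LZ hu1 mul1r.
  by apply: eq_bigr => y _; rewrite rank1_mul LZ.
set M := 1%:M - lam^-1 *: Q.
have h1 := gram_ge0 M Hrho.
have e1 : L rho (M *m adjmx M) = \tr rho - 2 * lam^-1 * T + lam^-1 * lam^-1 * (T + Z).
  rewrite /M adjmxD adjmxN adjmxZ adjmx1 QH lamc' mulmxBl !mulmxBr !mul1mx mulmx1.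
  rewrite -!scalemxAl -scalemxAr !LB !LZ LQ LQQ /L mul1mx; ring.
set w := fun x y => u x - (sc * Num.conj (g x y)) *: u y.
have h2 : 0 <= \sum_x \sum_(y | y != x) L rho (w x y *m adjmx (w x y)).
  by apply: sumr_ge0 => x _; apply: sumr_ge0 => y _; apply: L_ge0.
have e2 : \sum_x \sum_(y | y != x) L rho (w x y *m adjmx (w x y))
          = 2 * (n%:R - 1) * T - 2 * sc * Z.
  rewrite (eq_bigr (fun x => \sum_(y | y != x) ((b x x + b y y) - sc * (g x y * b x y) - sc * (g y x * b y x)))); last first.
    move=> x _; apply: eq_bigr => y hyx; rewrite /w L_w.
    have hg : Num.conj (g x y) = g y x by rewrite /g dot_conj.
    have hxy : x != y by rewrite eq_sym.
    have hm := hmu x y hxy.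
    have c1 : Num.conj (sc * Num.conj (g x y)) = sc * g x y by rewrite rmorphM /= conjCK hsc.
    have hm' : sc * g y x * (sc * g x y) = 1 by rewrite -hg /g -[RHS]hm; ring.
    rewrite c1 hg hm' /b; ring.
  have cnt : forall F : 'I_n -> C, \sum_x \sum_(y | y != x) F x = (n%:R - 1) * \sum_x F x.
    move=> F; rewrite mulr_sumr; apply: eq_bigr => x _; rewrite sum_neq_const -mulr_natr; ring.
  under eq_bigr => x _ do rewrite !sumrB big_split /=.
  rewrite !sumrB big_split /=.
  rewrite (swap_neq (fun x y => b y y)) (swap_neq (fun x y => sc * (g y x * b y x))) /= !cnt.
  have hz : \sum_x \sum_(y | y != x) sc * (g x y * b x y) = sc * Z.
    by rewrite /Z mulr_sumr; apply: eq_bigr => x _; rewrite mulr_sumr.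
  rewrite hz /T /b; ring.
have key : lam * \tr rho - T = lam * L rho (M *m adjmx M)
     + (2 * lam * sc)^-1 * \sum_x \sum_(y | y != x) L rho (w x y *m adjmx (w x y)).
  rewrite e1 e2 /lam; field.
  have h3 : 0 < sc + (n%:R - 1) by apply: (lt_le_trans sc0); rewrite lerDl.
  by rewrite (gt_eqF sc0) (gt_eqF h3).
rewrite -subr_ge0 key; apply: addr_ge0; first by apply: mulr_ge0 => //; apply: ltW.
by apply: mulr_ge0 => //; rewrite invr_ge0 !mulr_ge0 // ltW.
Qed.

End H.

Section H4.
Variable R : realType.
Local Notation C := R[i].
Local Open Scope complex_scope.

Lemma complete d (phi : 'I_d -> 'cV[C]_d) : orthonormal_basis phi ->
  \sum_a phi a *m adjmx (phi a) = 1%:M.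
Proof.
move=> hON; set U := \matrix_(i, a) phi a i 0.
have h1 : adjmx U *m U = 1%:M.
  apply/matrixP => a b; rewrite [RHS]mxE -(hON a b) !mxE; apply: eq_bigr => i _.
  by rewrite !mxE.
have h2 := mulmx1C h1.
rewrite -h2; apply/matrixP => i j; rewrite !mxE summxE; apply: eq_bigr => a _.
by rewrite !mxE big_ord1 !mxE.
Qed.

Lemma psd_rank1 d (v : 'cV[C]_d) : psd (v *m adjmx v).
Proof.
split; first by rewrite adjmxM adjmxK.
move=> w; rewrite mulmxA -mulmxA [adjmx w *m v]mx11_scalar mul_scalar_mx.
rewrite mxE -/(dot w v) -/(dot v w) -dot_conj mulrC; exact: mul_conjC_ge0.
Qed.

Lemma psdZ d (A : 'M[C]_d) (c : C) : psd A -> 0 <= c -> psd (c *: A).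
Proof.
move=> [hA hq] c0; split.
  by rewrite adjmxZ hA conj_Creal // ger0_real.
by move=> w; rewrite -scalemxAr -scalemxAl mxE mulr_ge0.
Qed.

Lemma tr_rank1 d (v : 'cV[C]_d) : \tr (v *m adjmx v) = dot v v.
Proof. by rewrite mxtrace_mulC trace_mx11. Qed.

Lemma normc_le (z : C) (r : R) : 0 <= z -> z <= r%:C -> Normc.normc z <= r.
Proof.
move=> z0 zr; have e : (Normc.normc z)%:C = z.
  have e0 : `|z| = (Normc.normc z)%:C by case: z {zr z0}.
  by rewrite -e0 ger0_norm.
by rewrite -lecR e.
Qed.

Lemma normc_ge (z : C) (r : R) : r%:C <= z -> 0 <= z -> r <= Normc.normc z.
Proof.
move=> zr z0; have e : (Normc.normc z)%:C = z.
  have e0 : `|z| = (Normc.normc z)%:C by case: z {zr z0}.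
  by rewrite -e0 ger0_norm.
by rewrite -lecR e.
Qed.

End H4.

Section H5.
Variable R : realType.
Local Notation C := R[i].
Local Open Scope complex_scope.

Lemma pairing_L d n m (F sigma : 'I_n -> 'I_m -> 'M[C]_d) :
  pairing F sigma = \sum_x \sum_a L (sigma x a) (F x a).
Proof. by rewrite /pairing raddf_sum; apply: eq_bigr => x _; rewrite raddf_sum. Qed.

Lemma L_rho_sum d k (c : 'I_k -> C) (rho : 'I_k -> 'M[C]_d) A :
  L (\sum_l c l *: rho l) A = \sum_l c l * L (rho l) A.
Proof. rewrite /L mulmx_sumr raddf_sum /=; apply: eq_bigr => l _; rewrite -scalemxAr; exact: mxtraceZ. Qed.

Lemma pairing_LHS d n m k (F : 'I_n -> 'I_m -> 'M[C]_d) (q : 'I_k -> R) rho p :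
  pairing F (fun x a => \sum_l ((q l * p l x a)%:C *: rho l)) =
  \sum_l (q l)%:C * \sum_x \sum_a (p l x a)%:C * L (rho l) (F x a).
Proof.
rewrite pairing_L.
under eq_bigr do under eq_bigr do rewrite L_rho_sum.
under eq_bigr do rewrite exchange_big.
rewrite exchange_big; apply: eq_bigr => l _; rewrite mulr_sumr; apply: eq_bigr => x _.
rewrite mulr_sumr; apply: eq_bigr => a _; by rewrite rmorphM mulrA.
Qed.

Lemma argmax_ex m (i0 : 'I_m) (f : 'I_m -> R) : exists a0, forall a, f a <= f a0.
Proof. by case: (@arg_maxP _ _ _ i0 predT f isT) => a0 _ h; exists a0 => a; apply: h. Qed.

End H5.

Section H6.
Variable R : realType.
Local Notation C := R[i].
Local Open Scope complex_scope.

Lemma dot1 d (phi : 'I_d -> 'cV[C]_d) a : orthonormal_basis phi -> dot (phi a) (phi a) = 1.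
Proof. by move=> h; rewrite /dot h eqxx. Qed.

Lemma SQ_bound d n (phi : 'I_n -> 'I_d -> 'cV[C]_d) (sigma : 'I_n -> 'I_d -> 'M[C]_d) :
  (forall x, orthonormal_basis (phi x)) -> assemblage sigma ->
  0 <= pairing (fun x a => phi x a *m adjmx (phi x a)) sigma <= n%:R.
Proof.
move=> hON [hpsd [rho [hsum htr]]]; rewrite pairing_L; apply/andP; split.
  by apply: sumr_ge0 => x _; apply: sumr_ge0 => a _; apply: L_ge0.
have -> : (n%:R : C) = \sum_(x < n) 1 by rewrite sumr_const card_ord.
apply: ler_sum => x _.
have e : \sum_a L (sigma x a) 1%:M = 1 by rewrite /L (eq_bigr (fun a => \tr (sigma x a))) => [|a _]; rewrite ?mul1mx // -raddf_sum hsum.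
rewrite -e; apply: ler_sum => a _.
rewrite -(complete (hON x)) L_sum (bigD1 a) //= lerDl.
by apply: sumr_ge0 => b _; apply: L_ge0.
Qed.

Lemma SQ_witness d n (phi : 'I_n -> 'I_d -> 'cV[C]_d) : (0 < d)%N ->
  (forall x, orthonormal_basis (phi x)) ->
  exists sigma, assemblage sigma /\ pairing (fun x a => phi x a *m adjmx (phi x a)) sigma = n%:R.
Proof.
move=> d0 hON; set c : C := (d%:R)^-1.
have dn0 : (d%:R : C) != 0 by rewrite pnatr_eq0 -lt0n.
exists (fun x a => c *: (phi x a *m adjmx (phi x a))); split.
  split; first by move=> x a; apply: psdZ; [apply: psd_rank1 | rewrite invr_ge0 ler0n].
  exists (c *: 1%:M); split.
    by move=> x; rewrite -scaler_sumr complete.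
  by rewrite mxtraceZ mxtrace1 mulVf.
rewrite pairing_L.
have t : forall x a, L (c *: (phi x a *m adjmx (phi x a))) (phi x a *m adjmx (phi x a)) = c.
  move=> x a; rewrite /L -scalemxAr rank1_mul dot1 // scale1r linearZ /= tr_rank1 dot1 // mulr1 //.
under eq_bigr do under eq_bigr do rewrite t.
have e1 : \sum_(a < d) c = 1 by rewrite sumr_const card_ord /c -(mulr_natr (d%:R)^-1 d) mulVf.
rewrite (eq_bigr (fun _ => 1)); last by move=> x _; exact: e1.
by rewrite sumr_const card_ord.
Qed.

End H6.

Section H7.
Variable R : realType.
Local Notation C := R[i].
Local Open Scope complex_scope.

Lemma mub_prod d (v w : 'cV[C]_d) : (2 <= d)%N ->
  Normc.normc (dot v w) = 1 / Num.sqrt (d%:R) ->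
  (Num.sqrt (d%:R : R))%:C * (Num.sqrt (d%:R : R))%:C * (dot v w * Num.conj (dot v w)) = 1.
Proof.
move=> hd hn.
have e0 : `|dot v w| = (Normc.normc (dot v w))%:C by case: (dot v w).
have s0 : Num.sqrt (d%:R : R) != 0 by rewrite sqrtr_eq0 -ltNge ltr0n (ltnW hd).
have E : Num.sqrt (d%:R : R) * Num.sqrt d%:R * (1 / Num.sqrt d%:R) ^+ 2 = 1 by field.
rewrite -normCK e0 hn -rmorphXn -!rmorphM E; exact: rmorph1.
Qed.

Lemma LHS_bound d n (phi : 'I_n -> 'I_d -> 'cV[C]_d) (sigma : 'I_n -> 'I_d -> 'M[C]_d) :
  (2 <= d)%N -> (1 <= n)%N ->
  (forall x, orthonormal_basis (phi x)) ->
  (forall x y, x != y -> mutually_unbiased (phi x) (phi y)) ->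
  has_LHS sigma ->
  0 <= pairing (fun x a => phi x a *m adjmx (phi x a)) sigma <=
     1 + (n%:R - 1) / (Num.sqrt (d%:R : R))%:C.
Proof.
move=> hd hn hON hMU [k [q [rho [p [hq [hq1 [hrho [hp [hp1 hs]]]]]]]]].
have -> : sigma = (fun x a => \sum_l ((q l * p l x a)%:C *: rho l)).
  by apply: funext => x; apply: funext => a; rewrite hs.
rewrite pairing_LHS.
set lam := 1 + _.
set t := fun l x a => L (rho l) (phi x a *m adjmx (phi x a)).
have t0 : forall l x a, 0 <= t l x a by move=> l x a; apply: L_ge0; case: (hrho l).
have i0 : 'I_d := Ordinal (ltnW hd).
have hS : forall l, 0 <= \sum_x \sum_a (p l x a)%:C * t l x a <= lam.
  move=> l; apply/andP; split.
    by apply: sumr_ge0 => x _; apply: sumr_ge0 => a _; rewrite mulr_ge0 // ler0c.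
  pose am := fun x => [arg max_(i > i0) complex.Re (t l x i)]%O.
  have ham : forall x a, t l x a <= t l x (am x).
    move=> x a; rewrite -(RRe_real (ger0_real (t0 l x a))) -(RRe_real (ger0_real (t0 l x (am x)))) lecR.
    by rewrite /am; case: (@arg_maxP _ _ _ i0 predT (fun i => complex.Re (t l x i)) isT) => a0 _ h; apply: h.
  apply: (le_trans (y := \sum_x t l x (am x))).
    apply: ler_sum => x _.
    apply: (le_trans (y := \sum_a (p l x a)%:C * t l x (am x))).
      by apply: ler_sum => a _; apply: ler_wpM2l; rewrite ?ler0c.
    by rewrite -mulr_suml -rmorph_sum hp1 mul1r.
  have sc0 : 0 < (Num.sqrt (d%:R : R))%:C by rewrite ltcR sqrtr_gt0 ltr0n (ltnW hd).
  have := key (u := fun x => phi x (am x)) (proj1 (hrho l)) sc0 (conjc_real _) hn.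
  rewrite (proj2 (hrho l)) mulr1; apply.
    by move=> x; apply: dot1.
  by move=> x y hxy; apply: mub_prod => //; apply: hMU.
apply/andP; split.
  by apply: sumr_ge0 => l _; apply: mulr_ge0; [rewrite ler0c | case/andP: (hS l)].
apply: (le_trans (y := \sum_l (q l)%:C * lam)).
  by apply: ler_sum => l _; apply: ler_wpM2l; [rewrite ler0c | case/andP: (hS l)].
by rewrite -mulr_suml -rmorph_sum hq1 mul1r.
Qed.

End H7.

Local Open Scope complex_scope.

Theorem theorem1 (R : realType) (d n : nat) (hd : (2 <= d)%N) (hn : (1 <= n)%N)
  (phi : 'I_n -> 'I_d -> 'cV[R[i]]_d)
  (hON : forall x, orthonormal_basis (phi x))
  (hMU : forall x y, x != y -> mutually_unbiased (phi x) (phi y)) :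
  n%:R * Num.sqrt (d%:R) / (n%:R + 1 + Num.sqrt (d%:R))
    <= violation (fun x a => phi x a *m adjmx (phi x a)).
Proof.
set F := fun x a => phi x a *m adjmx (phi x a).
set s := Num.sqrt (d%:R : R).
have s0 : 0 < s by rewrite sqrtr_gt0 ltr0n (ltnW hd).
have n1 : 1 <= (n%:R : R) by rewrite ler1n.
set lr : R := 1 + (n%:R - 1) / s.
have lr1 : 1 <= lr by rewrite /lr lerDl divr_ge0 // ?subr_ge0 // ltW.
have lamE : (lr%:C : R[i]) = 1 + (n%:R - 1) / s%:C.
  by rewrite /lr rmorphD rmorph1 rmorphM fmorphV rmorphB rmorph_nat.
have natE : forall m, ((m%:R : R)%:C : R[i]) = m%:R by move=> m; rewrite rmorph_nat.
set EQ := [set r : R | exists sigma, assemblage sigma /\ r = Normc.normc (pairing F sigma)]%classic.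
set EL := [set r : R | exists sigma, has_LHS sigma /\ r = Normc.normc (pairing F sigma)]%classic.
have hubQ : has_ubound EQ.
  exists (n%:R : R); move=> r [sigma [ha ->]]; have /andP[h1 h2] := SQ_bound hON ha.
  by apply: normc_le => //; rewrite natE.
have SQge : n%:R <= S_Q F.
  have [sigma [ha hp]] := SQ_witness (ltnW hd) hON.
  apply: le_trans (ub_le_sup hubQ (ex_intro _ sigma (conj ha erefl))).
  by rewrite /F hp; apply: normc_ge; rewrite ?natE ?ler0n.
have hubL : has_ubound EL.
  exists lr; move=> r [sigma [ha ->]]; have /andP[h1 h2] := LHS_bound hd hn hON hMU ha.
  by apply: normc_le => //; rewrite lamE.
have x0 : 'I_n := Ordinal hn.
have a0 : 'I_d := Ordinal (ltnW hd).
set c : R := (d%:R)^-1.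
have c0 : 0 < c by rewrite invr_gt0 ltr0n (ltnW hd).
pose sigma1 : 'I_n -> 'I_d -> 'M[R[i]]_d := fun x a => \sum_(l < 1) (((1 : R) * c)%:C *: F x0 a0).
have hL1 : has_LHS sigma1.
  exists 1%N, (fun _ => 1), (fun _ => F x0 a0), (fun _ _ _ => c).
  split; first by move=> l; rewrite ler01.
  split; first by rewrite big_ord1.
  split; first by move=> l; split; [apply: psd_rank1 | rewrite tr_rank1 dot1].
  split; first by move=> *; apply: ltW.
  split; last by [].
  by move=> l x; rewrite sumr_const card_ord /c -(mulr_natr (d%:R)^-1 d) mulVf // pnatr_eq0 -lt0n (ltnW hd).
have p1 : pairing F sigma1 = (c *+ n)%:C.
  rewrite /sigma1 (pairing_LHS F (fun _ => (1:R)) (fun _ => F x0 a0) (fun _ _ _ => c)) big_ord1 rmorph1 mul1r rmorphMn.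
  rewrite (eq_bigr (fun _ => c%:C)); first by rewrite sumr_const card_ord.
  move=> x _; rewrite -mulr_sumr -L_sum (complete (hON x)) /L mul1mx.
  by rewrite tr_rank1 dot1 // mulr1.
have SLpos : 0 < S_LHS F.
  apply: lt_le_trans (ub_le_sup hubL (ex_intro _ sigma1 (conj hL1 erefl))).
  apply: (lt_le_trans (y := c *+ n)); first by rewrite pmulrn_lgt0 // -lt0n.
  by rewrite p1; apply: normc_ge => //; rewrite ler0c mulrn_wge0 // ltW.
have SLle : S_LHS F <= lr.
  apply: ge_sup; first by exists (Normc.normc (pairing F sigma1)), sigma1.
  by move=> r [sigma [ha ->]]; have /andP[h1 h2] := LHS_bound hd hn hON hMU ha; apply: normc_le => //; rewrite lamE.
rewrite /violation.
have lr0 : 0 < lr by apply: lt_le_trans ltr01 lr1.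
apply: (le_trans (y := n%:R / lr)).
  have -> : n%:R / lr = n%:R * s / (s + n%:R - 1).
    have h1 : s != 0 by rewrite gt_eqF.
    have h2 : s + n%:R - 1 != 0 by rewrite gt_eqF //; lra.
    have h3 : s + (n%:R - 1) != 0 by rewrite gt_eqF //; lra.
    have h4 : s + n%:R - 1 != 0 by rewrite gt_eqF //; lra.
    rewrite /lr; field.
    by rewrite ?h1 ?h2 ?h3.
  apply: ler_wpM2l; first by rewrite mulr_ge0 // ltW.
  rewrite lef_pV2 ?posrE; [lra| |]; try lra.
apply: (le_trans (y := n%:R / S_LHS F)).
  by apply: ler_wpM2l; rewrite ?ler0n // lef_pV2 ?posrE.
by apply: ler_wpM2r => //; rewrite invr_ge0 ltW.
Qed.
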